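(* Let $\mathcal F$ be a Banach function space compactly embedded in $C(\mathbf X)$ and $\gamma>0$ such that $$L:=\limsup_{\epsilon\to0}\frac{\mathcal H_\epsilon(U_{\mathcal F})}{(1/\epsilon)^\gamma}\in(0,\infty).$$ There exists a strategy for Predictor such that for every $F\in\mathcal F$ there is $N_0$ (depending on $F$ but not on Reality's moves) such that for all $N\ge N_0$ and all moves of Reality $$\sum_{n=1}^N(y_n-\mu_n)^2\le\sum_{n=1}^N(y_n-F(x_n))^2+CL^{\frac1{\gamma+1}}\phi^{\frac\gamma{\gamma+1}}N^{\frac\gamma{\gamma+1}},$$ where $C$ is a universal constant and $\phi:=2\max(1,\|F\|_{\mathcal F})$.
   Context: Protocol: $\mathbf X$ a nonempty topological space; at each round $n$ Reality announces $x_n\in\mathbf X$, Predictor announces $\mu_n\in\mathbb R$, Reality announces $y_n\in[-1,1]$; a strategy for Predictor maps each history to $\mu_n$. $C(\mathbf X)$: bounded continuous real functions with supremum norm. A Banach function space compactly embedded in $C(\mathbf X)$: a linear subspace $\mathcal F\subseteq C(\mathbf X)$ with a norm $\|\cdot\|_{\mathcal F}$ making it a Banach space whose unit ball $U_{\mathcal F}=\{F:\|F\|_{\mathcal F}\le1\}$ is compact in $C(\mathbf X)$. $\mathcal H_\epsilon(A)$: $\log_2$ of the minimal number of points of $A$ forming an $\epsilon$-net for $A$ in the supremum metric. *)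

(* Defs.v *)
From HB Require Import structures.
From mathcomp Require Import all_boot all_order all_algebra.
From mathcomp Require Import all_classical all_reals all_analysis.
From mathcomp Require Import Rstruct Rstruct_topology.
Set Implicit Arguments. Unset Strict Implicit. Unset Printing Implicit Defensive.
Import Order.TTheory GRing.Theory Num.Theory.
Local Open Scope classical_set_scope.
Local Open Scope ring_scope.

Notation R := Rdefinitions.R.

Section Defs.
Variable X : topologicalType.

Definition bounded_continuous (f : X -> R) : Prop :=
  continuous f /\ exists M : R, forall x, `|f x| <= M.

Definition banach_fun_space_cpt (F : set (X -> R)) (nrm : (X -> R) -> R) : Prop :=
  [/\
      (forall f, F f -> bounded_continuous f) /\
      F (fun=> 0) /\
      (forall f g, F f -> F g -> F (f \+ g)) /\
      (forall (a : R) f, F f -> F (fun x => a * f x)),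
      (forall f, F f -> 0 <= nrm f) /\
      (forall f, F f -> nrm f = 0 -> f = (fun=> 0)) /\
      (forall (a : R) f, F f -> nrm (fun x => a * f x) = `|a| * nrm f) /\
      (forall f g, F f -> F g -> nrm (f \+ g) <= nrm f + nrm g),
      (forall u : nat -> (X -> R), (forall n, F (u n)) ->
         (forall e : R, 0 < e -> exists N, forall m n, (N <= m)%N -> (N <= n)%N ->
              nrm (u m \- u n) < e) ->
         exists f, F f /\ forall e : R, 0 < e -> exists N, forall n, (N <= n)%N ->
              nrm (u n \- f) < e)
    & (* unit ball compact for the supremum metric (uniform convergence) *)
      compact ([set f | F f /\ nrm f <= 1] : set {uniform X -> R})].

Definition unit_ball (F : set (X -> R)) (nrm : (X -> R) -> R) : set (X -> R) :=
  [set f | F f /\ nrm f <= 1].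

Definition is_net (A : set (X -> R)) (eps : R) (s : seq (X -> R)) : Prop :=
  (forall g, g \in s -> A g) /\
  (forall f, A f -> exists2 g, g \in s & forall x, `|f x - g x| <= eps).

Definition covering_number (A : set (X -> R)) (eps : R) : R :=
  inf [set (size s)%:R | s in [set s | is_net A eps s]].

Definition metric_entropy (A : set (X -> R)) (eps : R) : R :=
  ln (covering_number A eps) / ln 2.

End Defs.

Definition entropy_limsup (X : topologicalType) (U : set (X -> R)) (gamma : R)
  : \bar R :=
  limf_esup (fun eps : R => ((metric_entropy U eps) / (eps^-1) `^ gamma)%:E)
            (at_right (0 : R)).

(* Prediction protocol: the history before round n is the list of previous
   (x_i, y_i); Predictor's moves are determined by the strategy. *)
Definition strategy (X : Type) := seq (X * R) -> X -> R.

Definition pred_move (X : Type) (S : strategy X) (x : nat -> X) (y : nat -> R)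
  (n : nat) : R :=
  S [seq (x i, y i) | i <- iota 0 n] (x n).

(* Main.v *)
Require Import Defs.
From HB Require Import structures.
From mathcomp Require Import all_boot all_order all_algebra.
From mathcomp Require Import all_classical all_reals all_analysis.
From mathcomp Require Import Rstruct Rstruct_topology.
From mathcomp Require Import ring lra.
Import Order.TTheory GRing.Theory Num.Theory.
Local Open Scope classical_set_scope.
Local Open Scope ring_scope.

Lemma expR_quad (z : R) : z <= 1/2 -> expR z <= 1 + z + 2 * z^+2.
Proof.
move=> hz.
have h1 : 1 - z <= expR (- z) by have := expR_ge1Dx (- z); rewrite -[_ - _]/(1 + - z).
have h2 : expR z * expR (- z) = 1 by rewrite -exp.expRD subrr exp.expR0.
have E0 := expR_gt0 z.
have h3 : expR z * (1 - z) <= 1 by rewrite -[X in _ <= X]h2 ler_wpM2l // ltW.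
nra.
Qed.

Lemma mix1 (y p q : R) : -1 <= y <= 1 -> -1 <= p <= 1 -> -1 <= q <= 1 ->
  expR (- (1/32) * (y - p)^+2) <=
  expR (- (1/32) * (y - q)^+2) * (1 + 2 * (1/32) * (y - q) * (p - q)).
Proof.
move=> /andP[y1 y2] /andP[p1 p2] /andP[q1 q2].
set z := (1/32) * ((p - q) * (2 * y - p - q)).
have ez : - (1/32) * (y - p)^+2 = - (1/32) * (y - q)^+2 + z by rewrite /z; ring.
rewrite ez exp.expRD; apply: ler_wpM2l; first exact: ltW (expR_gt0 _).
have s16 : (2 * y - p - q)^+2 <= 16 by nra.
have d0 : 0 <= (p - q)^+2 by exact: sqr_ge0.
have zb : z <= 1/2 by rewrite /z; nra.
apply: le_trans; first exact: (expR_quad z zb).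
have hz1 : z = 2 * (1/32) * (y - q) * (p - q) - (1/32) * (p - q)^+2 by rewrite /z; ring.
have hz2 : z^+2 = (1/32) * (1/32) * ((p - q)^+2 * (2 * y - p - q)^+2) by rewrite /z; ring.
have H : 0 <= (p - q)^+2 * (16 - (2 * y - p - q)^+2) by apply: mulr_ge0 => //; lra.
have H' : (p - q)^+2 * (2 * y - p - q)^+2 <= 16 * (p - q)^+2.
  by nra.
rewrite hz2 {1}hz1.
move: H' d0; set A := 2 * _ * _ * _; set D := (p - q)^+2; set P := D * _.
lra.
Qed.

Lemma mixture (J : eqType) (s : seq J) (w p : J -> R) (w0 y : R) :
  0 <= w0 -> (forall j, 0 <= w j) -> (forall j, -1 <= p j <= 1) -> -1 <= y <= 1 ->
  w0 * expR (- (1/32) * (y - 0)^+2) + \sum_(j <- s) w j * expR (- (1/32) * (y - p j)^+2)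
  <= (w0 + \sum_(j <- s) w j) *
     expR (- (1/32) * (y - (\sum_(j <- s) w j * p j) / (w0 + \sum_(j <- s) w j))^+2).
Proof.
move=> w00 w_ge0 pb1 yb.
set Sw := \sum_(j <- s) w j; set Swp := \sum_(j <- s) w j * p j.
have Sw0 : 0 <= Sw by apply: sumr_ge0.
have [W0|Wpos] := eqVneq (w0 + Sw) 0.
  have w00' : w0 = 0 by lra.
  have Sw00 : Sw = 0 by lra.
  have wj0 : forall j, j \in s -> w j = 0.
    move=> j js; move: Sw00; rewrite /Sw => /eqP; rewrite psumr_eq0 //.
    by move=> /allP /(_ j js) /eqP.
  rewrite W0 mul0r w00' mul0r add0r big_seq big1 // => j js.
  by rewrite wj0 // mul0r.
have W0 : 0 < w0 + Sw by rewrite lt_def Wpos /=; lra.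
set pb := Swp / (w0 + Sw).
have hpb : pb * (w0 + Sw) = Swp by rewrite /pb divfK.
have absSwp : `|Swp| <= Sw.
  rewrite /Swp /Sw; apply: le_trans (ler_norm_sum _ _ _) _.
  apply: ler_sum => j _; rewrite normrM ger0_norm //.
  have := pb1 j; move=> /andP[h1 h2].
  rewrite -[X in _ <= X]mulr1; apply: ler_wpM2l => //.
  by rewrite ler_norml h1 h2.
have pbb : -1 <= pb <= 1.
  have : `|pb| <= 1.
    rewrite /pb normrM normfV (gtr0_norm W0) ler_pdivrMr // mul1r.
    by lra.
  by rewrite ler_norml.
set E := expR (- (1/32) * (y - pb)^+2).
set c := 2 * (1/32) * (y - pb).
have E0 : 0 <= E by exact: ltW (expR_gt0 _).
have tail : w0 * expR (- (1/32) * (y - 0)^+2) <= w0 * (E * (1 + c * (0 - pb))).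
  apply: ler_wpM2l => //; rewrite /E /c -!mulrA.
  have := mix1 y 0 pb yb; rewrite !mulrA; apply => //; lra.
have sum : \sum_(j <- s) w j * expR (- (1/32) * (y - p j)^+2)
    <= \sum_(j <- s) (E * w j + (E * c) * (w j * p j) - (E * c * pb) * w j).
  apply: ler_sum => j _.
  have h := mix1 y (p j) pb yb (pb1 j) pbb.
  have := ler_wpM2l (w_ge0 j) h.
  rewrite /E /c; move=> H; apply: le_trans H _; rewrite le_eqVlt; apply/orP; left; apply/eqP; ring.
rewrite sumrB big_split /= -!mulr_sumr -/Sw -/Swp in sum.
have : E * c * Swp - E * c * pb * (w0 + Sw) = 0 by rewrite -hpb; ring.
move: tail sum; set T := w0 * _; set S := \sum_(j <- s) _.
move=> tail sum h0.
have eq : w0 * (E * (1 + c * (0 - pb))) + (E * Sw + E * c * Swp - E * c * pb * Sw)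
  = (w0 + Sw) * E + (E * c * Swp - E * c * pb * (w0 + Sw)) by ring.
rewrite h0 addr0 in eq.
rewrite -eq; exact: lerD.
Qed.

HB.instance Definition _ (X : choiceType) :=
  isPointed.Build {uniform X -> R} (fun _ : X => (0:R)).
Section S.
Variable X : topologicalType.
Lemma net_exists (A : set (X -> R)) (e : R) : 0 < e ->
  compact (A : set {uniform X -> R}) -> exists s, is_net A e s.
Proof.
move=> e0 cA.
pose P (g : X -> R) : set (X -> R) := [set h | forall y, `|g y - h y| < e].
have nP : forall g : {uniform X -> R}, nbhs g (P g).
  move=> g; apply/uniform_nbhs; exists [set xy : R * R | ball xy.1 e xy.2]; split.
    exact: (entourage_ball _ (PosNum e0)).
  by move=> h /= H y; have := H y I; rewrite /ball /=.
move: cA; rewrite (@compact_cover {uniform X -> R}) => /(_ _ A (fun g => (P g : set {uniform X -> R})°)).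
case.
- by move=> g _; exact: open_interior.
- move=> g Ag; exists g => //; exact: nbhs_singleton (nbhs_interior (nP g)).
move=> D DA cov; exists (finmap.enum_fset D); split.
  by move=> g gD; have := DA g gD; rewrite inE.
move=> f Af; have [g gD Pg] := cov f Af.
exists g => //; move=> y; have := interior_subset Pg y => /ltW.
by rewrite distrC.
Qed.

Lemma min_net_exists (A : set (X -> R)) (e : R) : 0 < e ->
  compact (A : set {uniform X -> R}) ->
  exists s, is_net A e s /\ covering_number A e = (size s)%:R.
Proof.
move=> e0 cA.
pose Q := fun n => `[< exists s, is_net A e s /\ size s = n >].
have exQ : exists n, Q n.
  have [s ns] := @net_exists A e e0 cA; exists (size s); apply/asboolP; by exists s.
case: (ex_minnP exQ) => n /asboolP [s [ns sz]] nmin.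
exists s; split => //.
rewrite /covering_number; apply/eqP; rewrite eq_le; apply/andP; split.
  apply: ge_inf; first by exists 0 => _ [t _ <-].
  by exists s.
apply: lb_le_inf; first by exists (size s)%:R, s.
move=> _ [t nt <-]; rewrite ler_nat sz; apply: nmin; apply/asboolP; by exists t.
Qed.
End S.

Lemma limsup_bound (X : topologicalType) (U : set (X -> R)) (g c : R) :
  (entropy_limsup U g < c%:E)%E ->
  exists2 e0 : R, 0 < e0 & forall d, 0 < d -> d < e0 ->
    metric_entropy U d / (d^-1) `^ g < c.
Proof.
rewrite /entropy_limsup limf_esupE => /ereal_inf_lt [_ [V FV <-]] supc.
move: FV; rewrite /at_right /within => /nbhs_ballP [e /= e0 He].
exists e => // d d0 de.
have Vd : V d.
  apply: He => //; rewrite /ball /= sub0r normrN gtr0_norm //.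
rewrite -lte_fin; apply: le_lt_trans supc; apply: ereal_sup_ubound.
by exists d.
Qed.


Definition clip (a : R) : R := if a < -1 then -1 else if 1 < a then 1 else a.
Lemma clip_bound a : -1 <= clip a <= 1.
Proof. rewrite /clip; case: ifP => h1; first lra. case: ifP => h2; first lra.
move/negbT: h1; move/negbT: h2; rewrite -!leNgt => h1 h2; lra. Qed.

Lemma sum_const_seq (T : Type) (s : seq T) (c : R) : \sum_(g <- s) c = (size s)%:R * c.
Proof.
elim: s => [|a s IH]; first by rewrite big_nil mul0r.
by rewrite big_cons IH /= -natr1 mulrDl mul1r addrC.
Qed.

Lemma size_inv_le (n : nat) (a : R) : 0 < a -> n%:R * (a * n%:R)^-1 <= a^-1.
Proof.
move=> a0; case: n => [|n]; first by rewrite mul0r invr_ge0 ltW.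
have n0 : (n.+1)%:R != 0 :> R by rewrite pnatr_eq0.
by rewrite invfM mulrC -mulrA mulVf // mulr1.
Qed.

Lemma clip_lip (a b : R) : `|clip a - clip b| <= `|a - b|.
Proof.
have n1 := ler_norm (a - b); have n2 := ler_norm (b - a); rewrite distrC in n2.
rewrite ler_norml /clip.
case: (ltrP a (-1)) => ha; case: (ltrP 1 a) => ha'; case: (ltrP b (-1)) => hb;
  case: (ltrP 1 b) => hb'; apply/andP; split; lra.
Qed.

Lemma clip_sq (y f h : R) : -1 <= y <= 1 ->
  (y - clip h)^+2 <= (y - f)^+2 + 4 * `|f - h|.
Proof.
move=> /andP[y1 y2].
have c1 : (y - clip f)^+2 <= (y - f)^+2.
  rewrite /clip; case: ifP => h1; first nra.
  case: ifP => h2; first nra. lra.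
have c2 : `|clip f - clip h| <= `|f - h| by exact: clip_lip.
have hf := clip_bound f; have hh := clip_bound h.
have c3 : (y - clip h)^+2 <= (y - clip f)^+2 + 4 * `|clip f - clip h|.
  move: hf hh => /andP[f1 f2] /andP[h1 h2].
  have [e|e] := lerP 0 (clip f - clip h).
    rewrite ger0_norm //; nra.
  rewrite ltr0_norm //; nra.
lra.
Qed.

Lemma sum_indic (N d : nat) : \sum_(t < N) ((t <= d)%N%:R : R) <= d.+1%:R.
Proof.
suff : \sum_(t < N) ((t <= d)%N%:R : R) = (minn N d.+1)%:R.
  by move=> ->; rewrite ler_nat geq_minr.
elim: N => [|N IH]; first by rewrite big_ord0 min0n.
rewrite big_ord_recr /= IH -natrD; congr (_%:R).
case: (leqP N d) => h.
  by rewrite (minn_idPl (leqW h)) (minn_idPl (h : (N.+1 <= d.+1)%N)) addn1.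
by rewrite (minn_idPr (h : (d.+1 <= N)%N)) (minn_idPr (leqW h)) addn0.
Qed.

Section AA.
Variable X : topologicalType.
Variable net : nat -> nat -> seq (X -> R).
Notation J := (nat * nat * (X -> R))%type.

Definition ep (j : J) (t : nat) (x : X) : R :=
  if (maxn j.1.1 j.1.2 < t)%N then clip (2 ^+ j.1.2 * j.2 x) else 0.

Lemma ep_bound j t x : -1 <= ep j t x <= 1.
Proof. rewrite /ep; case: ifP => _; [exact: clip_bound | lra]. Qed.

Definition newe (n : nat) : seq J :=
  [seq (K, n, g) | K <- iota 0 n.+1, g <- net K n] ++
  [seq (n, m, g) | m <- iota 0 n, g <- net n m].

Fixpoint experts (n : nat) : seq J :=
  if n is n'.+1 then experts n' ++ newe n' else [::].

Definition prior (j : J) : R :=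
  ((2 * maxn j.1.1 j.1.2 + 1)%:R * 2 ^+ (maxn j.1.1 j.1.2).+1
    * (size (net j.1.1 j.1.2))%:R)^-1.

Lemma prior_ge0 j : 0 <= prior j.
Proof. by rewrite /prior invr_ge0 !mulr_ge0 // exprn_ge0. Qed.

Definition Pm n := \sum_(j <- experts n) prior j.

Lemma newe_max n j : j \in newe n -> maxn j.1.1 j.1.2 = n.
Proof.
rewrite mem_cat => /orP[] /allpairsPdep [a [g [ha _ ->]]] /=;
  move: ha; rewrite mem_iota add0n => /andP[_ ha].
  by apply/maxn_idPr; rewrite -ltnS.
by apply/maxn_idPl; apply: ltnW.
Qed.

Lemma sum_new n : \sum_(j <- newe n) prior j <= (2 ^+ n.+1)^-1.
Proof.
set B : R := ((2 * n + 1)%:R * 2 ^+ n.+1)^-1.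
have B0 : 0 < (2 * n + 1)%:R * 2 ^+ n.+1 :> R.
  by rewrite mulr_gt0 // ?ltr0n ?addn1 // exprn_gt0.
have H1 : \sum_(K <- iota 0 n.+1) \sum_(g <- net K n) prior (K, n, g) <= (n.+1)%:R * B.
  rewrite -[in X in _ <= X](size_iota 0 n.+1) -sum_const_seq big_seq [X in _ <= X]big_seq.
  apply: ler_sum => K; rewrite mem_iota add0n => /andP[_ hK].
  rewrite /prior /= (maxn_idPr (hK : (K <= n)%N)) sum_const_seq; exact: size_inv_le.
have H2 : \sum_(m <- iota 0 n) \sum_(g <- net n m) prior (n, m, g) <= n%:R * B.
  rewrite -[in X in _ <= X](size_iota 0 n) -sum_const_seq big_seq [X in _ <= X]big_seq.
  apply: ler_sum => m; rewrite mem_iota add0n => /andP[_ hm].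
  rewrite /prior /= (maxn_idPl (ltnW hm)) sum_const_seq; exact: size_inv_le.
rewrite /newe big_cat !big_allpairs_dep /=.
apply: le_trans (lerD H1 H2) _.
rewrite -mulrDl -natrD addSn addnn -mul2n -addn1 /B invfM mulrA mulfV ?mul1r // pnatr_eq0 addn1.
Qed.

Lemma Pm_le n : Pm n <= 1 - (2 ^+ n)^-1.
Proof.
elim: n => [|n IH]; first by rewrite /Pm big_nil expr0 invr1 subrr.
rewrite /Pm /= big_cat -/(Pm n).
apply: le_trans (lerD IH (sum_new n)) _.
rewrite exprS invfM.
have : 0 <= (2 ^+ n)^-1 :> R by rewrite invr_ge0 exprn_ge0.
set u := (2 ^+ n)^-1. lra.
Qed.

Lemma Pm_le1 n : 0 <= 1 - Pm n.
Proof.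
have := Pm_le n; have : 0 <= (2 ^+ n)^-1 :> R by rewrite invr_ge0 exprn_ge0.
lra.
Qed.

Lemma mem_experts K m g N : (maxn K m < N)%N -> g \in net K m -> (K, m, g) \in experts N.
Proof.
move=> hN hg; elim: N hN => [//|N IH] hN /=.
rewrite mem_cat; have [lt|ge] := ltnP (maxn K m) N; first by rewrite IH.
have eN : maxn K m = N by apply/eqP; rewrite eqn_leq ge -ltnS hN.
apply/orP; right; rewrite /newe mem_cat; apply/orP.
have [mN|mN] := eqVneq m N.
  left; apply/allpairsPdep; exists K, g; split.
  - by rewrite mem_iota add0n /= ltnS -eN leq_maxl.
  - by rewrite -mN.
  - by rewrite mN.
right; apply/allpairsPdep; exists m, g.
have KN : K = N.
  by move: eN; rewrite /maxn; case: ifP => // _ h; move: mN; rewrite h eqxx.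
have mlt : (m < N)%N by rewrite ltn_neqAle mN /= -eN leq_maxr.
by rewrite mem_iota add0n /= mlt -KN.
Qed.

Lemma ln_prior K m g : g \in net K m ->
  0 < prior (K, m, g) /\
  ln (prior (K, m, g))^-1 <= 3 * (maxn K m)%:R + 1 + ln (size (net K m))%:R.
Proof.
move=> hg; set d := maxn K m.
have s0 : (0 < size (net K m))%N by case: (net K m) hg.
have a0 : 0 < (2 * d + 1)%:R :> R by rewrite ltr0n addn1.
have b0 : 0 < 2 ^+ d.+1 :> R by exact: exprn_gt0.
have c0 : 0 < (size (net K m))%:R :> R by rewrite ltr0n.
rewrite /prior /= -/d invrK; split; first by rewrite invr_gt0 !mulr_gt0.
rewrite !lnM ?posrE ?mulr_gt0 // lnXn //.
have l2 : ln (2 : R) <= 1 by have := @le_ln1Dx _ (1 : R) ltac:(lra); rewrite -[1 + 1]/(2%:R).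
have l1 : ln (2 * d + 1)%:R <= 2 * d%:R :> R.
  have := @le_ln1Dx _ (2 * d%:R : R) ltac:(have : 0 <= d%:R :> R by []; lra).
  by rewrite natrD natrM addrC.
have : ln (2 : R) *+ d.+1 <= d.+1%:R.
  rewrite -[X in X <= _]mulr_natr; have h0 : 0 <= d.+1%:R :> R by []. have := ler_wpM2r h0 l2. by rewrite mul1r.
rewrite -natr1; lra.
Qed.

Definition strat : strategy X := fun h x' =>
  let n := size h in
  let w j := prior j * expR (- (1/32) *
      \sum_(t < n) ((nth (x', 0) h t).2 - ep j t (nth (x', 0) h t).1)^+2) in
  let w0 := (1 - Pm n) * expR (- (1/32) * \sum_(t < n) ((nth (x', 0) h t).2 - 0)^+2) in
  (\sum_(j <- experts n) w j * ep j n x') / (w0 + \sum_(j <- experts n) w j).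

Section Run.
Variables (x : nat -> X) (y : nat -> R).
Definition LE j n := \sum_(t < n) (y t - ep j t (x t))^+2.
Definition L0 n := \sum_(t < n) (y t - 0)^+2.
Definition Phi n := (1 - Pm n) * expR (- (1/32) * L0 n) +
  \sum_(j <- experts n) prior j * expR (- (1/32) * LE j n).

Lemma pred_moveE n : pred_move strat x y n =
  (\sum_(j <- experts n) (prior j * expR (- (1/32) * LE j n)) * ep j n (x n)) /
  ((1 - Pm n) * expR (- (1/32) * L0 n) +
     \sum_(j <- experts n) prior j * expR (- (1/32) * LE j n)).
Proof.
rewrite /pred_move /strat /= size_map size_iota.
have E : forall t : 'I_n, nth (x n, 0) [seq (x i, y i) | i <- iota 0 n] t = (x t, y t).
  by move=> t; rewrite (nth_map 0) ?size_iota // nth_iota.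
have HLE : forall j, \sum_(t < n) ((nth (x n, 0) [seq (x i, y i) | i <- iota 0 n] t).2 -
     ep j t (nth (x n, 0) [seq (x i, y i) | i <- iota 0 n] t).1)^+2 = LE j n.
  by move=> j; apply: eq_bigr => t _; rewrite E.
have HL0 : \sum_(t < n) ((nth (x n, 0) [seq (x i, y i) | i <- iota 0 n] t).2 - 0)^+2 = L0 n.
  by apply: eq_bigr => t _; rewrite E.
rewrite HL0; congr (_ / (_ + _)).
  by apply: eq_bigr => j _; rewrite HLE.
by apply: eq_bigr => j _; rewrite HLE.
Qed.


Lemma expR_split (a b : R) : expR (- (1/32) * (a + b)) = expR (- (1/32) * a) * expR (- (1/32) * b).
Proof. by rewrite mulrDr exp.expRD. Qed.

Lemma Phi_step n : -1 <= y n <= 1 ->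
  Phi n.+1 <= expR (- (1/32) * (y n - pred_move strat x y n)^+2) * Phi n.
Proof.
move=> yb.
have LEs j : LE j n.+1 = LE j n + (y n - ep j n (x n))^+2 by rewrite /LE big_ord_recr.
have L0s : L0 n.+1 = L0 n + (y n - 0)^+2 by rewrite /L0 big_ord_recr.
have new_eq j : j \in newe n -> LE j n.+1 = L0 n.+1.
  move=> jn; rewrite /LE /L0; apply: eq_bigr => t _; rewrite /ep (newe_max _ _ jn).
  by rewrite ltnNge -ltnS ltn_ord.
have Hnew : \sum_(j <- newe n) prior j * expR (- (1/32) * LE j n.+1) =
    (\sum_(j <- newe n) prior j) * expR (- (1/32) * L0 n.+1).
  rewrite mulr_suml big_seq [in RHS]big_seq; apply: eq_bigr => j jn.
  by rewrite new_eq.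
have -> : Phi n.+1 = (1 - Pm n) * expR (- (1/32) * L0 n.+1) +
    \sum_(j <- experts n) prior j * expR (- (1/32) * LE j n.+1).
  have eexp : experts n.+1 = experts n ++ newe n by [].
  rewrite /Phi /Pm eexp (big_cat _ (experts n) (newe n)) (big_cat _ (experts n) (newe n)) Hnew /=; ring.
rewrite L0s expR_split.
under eq_bigr => j _ do rewrite LEs expR_split.
rewrite pred_moveE [X in _ <= X]mulrC /Phi.
have H := @mixture _ (experts n) (fun j => prior j * expR (- (1/32) * LE j n))
  (fun j => ep j n (x n)) ((1 - Pm n) * expR (- (1/32) * L0 n)) (y n)
  (mulr_ge0 (Pm_le1 n) (ltW (expR_gt0 _)))
  (fun j => mulr_ge0 (prior_ge0 j) (ltW (expR_gt0 _)))
  (fun j => ep_bound j n (x n)) yb.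
rewrite mulrA; under eq_bigr => j _ do rewrite mulrA.
by apply: le_trans H _.
Qed.



Definition Lalg n := \sum_(t < n) (y t - pred_move strat x y t)^+2.

Lemma Phi0 : Phi 0 = 1.
Proof. by rewrite /Phi /Pm /L0 /= !big_nil big_ord0 subr0 mulr0 exp.expR0 mul1r addr0. Qed.

Lemma Phi_bound N : (forall t, -1 <= y t <= 1) -> Phi N <= expR (- (1/32) * Lalg N).
Proof.
move=> yb; elim: N => [|N IH]; first by rewrite Phi0 /Lalg big_ord0 mulr0 exp.expR0.
apply: le_trans (Phi_step N (yb N)) _.
rewrite /Lalg big_ord_recr /= expR_split mulrC; apply: ler_wpM2r => //.
Qed.

Lemma Phi_lower j N : j \in experts N -> prior j * expR (- (1/32) * LE j N) <= Phi N.
Proof.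
move=> jN; rewrite /Phi (big_rem _ jN) /=.
have h1 : 0 <= (1 - Pm N) * expR (- (1/32) * L0 N).
  exact: mulr_ge0 (Pm_le1 N) (ltW (expR_gt0 _)).
have h2 : 0 <= \sum_(i <- rem j (experts N)) prior i * expR (- (1 / 32) * LE i N).
  by apply: sumr_ge0 => i _; exact: mulr_ge0 (prior_ge0 i) (ltW (expR_gt0 _)).
lra.
Qed.

Lemma regret_expert j N : (forall t, -1 <= y t <= 1) -> j \in experts N -> 0 < prior j ->
  Lalg N <= LE j N + 32 * ln (prior j)^-1.
Proof.
move=> yb jN p0.
have H := le_trans (Phi_lower j N jN) (Phi_bound N yb).
rewrite -{1}(lnK p0) -exp.expRD ler_expR in H.
rewrite lnV ?posrE //; lra.
Qed.


Lemma LE_bound K m g (f : X -> R) (eps : R) N : (forall t, -1 <= y t <= 1) ->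
  (forall z, `|f z - 2 ^+ m * g z| <= eps) ->
  LE (K, m, g) N <= \sum_(t < N) (y t - f (x t))^+2 + (maxn K m).+1%:R + 4 * N%:R * eps.
Proof.
move=> yb fg.
have e0 : 0 <= eps by apply: le_trans (fg (x 0%N)).
have step : forall t : 'I_N, (y t - ep (K,m,g) t (x t))^+2 <=
    ((y t - f (x t))^+2 + 4 * eps) + ((t <= maxn K m)%N)%:R.
  move=> t; rewrite /ep /=; case: ltnP => h.
    have := clip_sq (y t) (f (x t)) (2 ^+ m * g (x t)) (yb t); have := fg (x t).
    rewrite /= addr0; lra.
  rewrite /= subr0; have := yb t; move=> /andP[h1 h2].
  have : 0 <= (y t - f (x t))^+2 := sqr_ge0 _. nra.
rewrite /LE; apply: le_trans (ler_sum _ (fun t _ => step t)) _.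
rewrite !big_split /= sumr_const card_ord -mulr_natl.
have := sum_indic N (maxn K m); lra.
Qed.

End Run.
End AA.

Lemma pow2_choice (r : R) : exists m, r <= 2 ^+ m /\ 2 ^+ m <= 2 * Num.max 1 r.
Proof.
have m1 : 1 <= Num.max 1 r by rewrite le_max lexx.
have mr : r <= Num.max 1 r by rewrite le_max lexx orbT.
have [n hn] : exists n, r <= 2 ^+ n.
  exists (Num.Def.archi_bound r); apply/ltW; apply: le_lt_trans (ler_norm r) _.
  apply: lt_le_trans (unstable.ltr_norm_bound r) _.
  by rewrite -natrX ler_nat ltnW // ltn_expl.
elim: n hn => [|n IH] hn; first by exists 0%N; rewrite expr0; lra.
have [h|h] := lerP r (2 ^+ n); first exact: IH.
exists n.+1; split => //; rewrite exprS; lra.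
Qed.

Lemma exp_quad (z : R) : 0 <= z -> z^+2 / 2 <= expR z.
Proof.
move=> z0; have := @expR_ge1Dxn _ z 1 z0.
rewrite /= (_ : 2`!%:R = 2) //; lra.
Qed.

Lemma alg1 (L gam b a u : R) : 0 < L -> gam * b = a -> a + b = 1 ->
  L * ((expR (b * ln L - b * u))^-1) `^ gam = expR (b * ln L + a * u).
Proof.
move=> L0 gb ab.
rewrite -expRN /powR gt_eqF ?expR_gt0 // expRK.
rewrite -{1}(lnK L0) -exp.expRD; congr expR.
apply/eqP; rewrite -subr_eq0.
have -> : ln L + gam * - (b * ln L - b * u) - (b * ln L + a * u)
  = ln L * (1 - (a + b)) + (ln L - u) * (a - gam * b) by ring.
by rewrite ab gb !subrr !mulr0 addr0.
Qed.

Lemma alg2 (L b a u : R) (n : nat) : u = ln 2 * n%:R -> a + b = 1 ->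
  2 ^+ n * expR (b * ln L - b * u) = expR (b * ln L + a * u).
Proof.
move=> hu ab.
have -> : 2 ^+ n = expR u :> R by rewrite hu expRM_natr lnK ?posrE.
rewrite -exp.expRD; congr expR.
have -> : a = 1 - b by lra.
ring.
Qed.

Lemma alg3 (L b a u P N : R) (n : nat) : 0 < L -> 0 < P -> 0 < N -> 0 <= a ->
  u = ln 2 * n%:R -> 2 ^+ n <= N * P ->
  expR (b * ln L + a * u) <= L `^ b * P `^ a * N `^ a.
Proof.
move=> L0 P0 N0 a0 hu hn.
rewrite /powR !gt_eqF // -!exp.expRD ler_expR.
have : u <= ln (N * P).
  rewrite hu.
  have -> : ln 2 * n%:R = ln (2 ^+ n : R) by rewrite lnXn // mulr_natr.
  by rewrite ler_ln ?posrE ?exprn_gt0 ?mulr_gt0.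
rewrite lnM ?posrE //.
move=> h; have := ler_wpM2l a0 h. nra.
Qed.


Theorem corollary8 :
  exists C : R,
  forall (X : topologicalType) (F : set (X -> R)) (nrm : (X -> R) -> R)
         (gamma : R),
    [set: X] !=set0 ->
    banach_fun_space_cpt F nrm ->
    0 < gamma ->
    (0 < entropy_limsup (unit_ball F nrm) gamma)%E ->
    (entropy_limsup (unit_ball F nrm) gamma < +oo)%E ->
    let L := fine (entropy_limsup (unit_ball F nrm) gamma) in
    exists S : strategy X,
      forall f : X -> R, F f ->
        let phi := 2 * Num.max 1 (nrm f) in
        exists N0 : nat, forall N : nat, (N0 <= N)%N ->
          forall (x : nat -> X) (y : nat -> R),
            (forall n, -1 <= y n <= 1) ->
            \sum_(n < N) (y n - pred_move S x y n) ^+ 2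
            <= \sum_(n < N) (y n - f (x n)) ^+ 2
               + C * L `^ (1 / (gamma + 1)) * phi `^ (gamma / (gamma + 1))
                 * (N%:R) `^ (gamma / (gamma + 1)).
Proof.
exists 73.
move=> X F nrm gamma X0 Hb g0 lim0 limoo L.
case: Hb => [[bc [F0 [Fadd Fscal]]] [nrm0 [nrmeq [nrmscal nrmtri]]] compl cpt].
have limE : entropy_limsup (unit_ball F nrm) gamma = L%:E.
  by rewrite /L fineK // gt0_fin_numE.
have L0 : 0 < L by rewrite -lte_fin -limE.
have [e0 e0pos He0] : exists2 e0 : R, 0 < e0 & forall d, 0 < d -> d < e0 ->
    metric_entropy (unit_ball F nrm) d / (d^-1) `^ gamma < 2 * L.
  by apply: limsup_bound; rewrite limE lte_fin; lra.
set b := 1 / (gamma + 1); set a := gamma / (gamma + 1).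
have g1 : 0 < gamma + 1 by lra.
have ab : a + b = 1 by rewrite /a /b -mulrDl divff // gt_eqF.
have gb : gamma * b = a by rewrite /a /b mulrA mulr1.
have b0 : 0 < b by rewrite /b divr_gt0.
have a0 : 0 < a by rewrite /a divr_gt0.
pose delta (K m : nat) := expR (b * ln L - b * (ln 2 * (K + m)%N%:R)).
have hnet : forall km : nat * nat, exists s, is_net (unit_ball F nrm) (delta km.1 km.2) s /\
    covering_number (unit_ball F nrm) (delta km.1 km.2) = (size s)%:R.
  by move=> km; apply: min_net_exists; [exact: expR_gt0 | exact: cpt].
case: (choice hnet) => nf Hnf.
pose net K m := nf (K, m).
exists (@strat X net).
move=> f Ff phi.
have nf0 := nrm0 f Ff.
have [m [fm mphi]] := pow2_choice (nrm f).
have l20 : 0 < ln (2:R) by apply: ln_gt0; lra.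
set c := expR (b * ln L) * (a * ln 2)^+2 / 2.
have c0 : 0 < c.
  by rewrite /c divr_gt0 // mulr_gt0 ?expR_gt0 // exprn_gt0 // mulr_gt0.
pose T0 := (Num.Def.archi_bound (130 / c)).+1.
pose T1 := Num.Def.archi_bound ((b * ln L - ln e0) / (b * ln 2)).
exists (maxn (2 ^ (maxn T0 T1)) m.+1).
move=> N hN x y yb.
have hN1 : (2 ^ maxn T0 T1 <= N)%N by apply: leq_trans hN; exact: leq_maxl.
have mN : (m < N)%N by apply: leq_trans hN; exact: leq_maxr.
have Npos : (0 < N)%N by apply: leq_trans hN1; rewrite expn_gt0.
set K := trunc_log 2 N.
have /andP[hK1 hK2] := trunc_log_bounds (isT : (1 < 2)%N) Npos.
have KT : (maxn T0 T1 <= K)%N by apply: trunc_log_max.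
have KN : (K < N)%N by apply: leq_trans (ltn_expl K (isT : (1 < 2)%N)) hK1.
rewrite -/K in hK1 hK2.
pose f' := fun z => (2 ^+ m)^-1 * f z.
have p2 : 0 < 2 ^+ m :> R by apply: exprn_gt0.
have Uf' : unit_ball F nrm f'.
  split; first exact: Fscal.
  rewrite /f' nrmscal // ger0_norm; last by rewrite invr_ge0 ltW.
  by rewrite mulrC ler_pdivrMr // mul1r.
have [Hnet Hcov] := Hnf (K, m).
have [g gin gapp] := Hnet.2 f' Uf'.
have fg : forall z, `|f z - 2 ^+ m * g z| <= 2 ^+ m * delta K m.
  move=> z; have -> : f z - 2 ^+ m * g z = 2 ^+ m * (f' z - g z).
    by rewrite /f' mulrBr mulrA mulfV ?gt_eqF // mul1r.
  rewrite normrM (ger0_norm (ltW p2)); apply: ler_wpM2l; [exact: (ltW p2) | exact: gapp].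
have jN : (K, m, g) \in @experts X net N.
  by apply: mem_experts => //; rewrite gtn_max KN mN.
have [p0 lnp] := @ln_prior X net K m g gin.
have R1 := @regret_expert X net x y (K, m, g) N yb jN p0.
have R2 := @LE_bound X x y K m g f _ N yb fg.
have dpos : 0 < delta K m := expR_gt0 _.
have hT1 : (b * ln L - ln e0) / (b * ln 2) < T1%:R.
  exact: le_lt_trans (ler_norm _) (unstable.ltr_norm_bound _).
have T1t : (T1%:R : R) <= (K + m)%N%:R.
  rewrite ler_nat; apply: leq_trans (leq_addr m K); apply: leq_trans KT; exact: leq_maxr.
have bl2 : 0 < b * ln 2 by rewrite mulr_gt0.
have dsmall : delta K m < e0.
  rewrite /delta -[X in _ < X](lnK e0pos) ltr_expR.
  move: hT1; rewrite ltr_pdivrMr // => hT1.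
  have : T1%:R * (b * ln 2) <= (K + m)%N%:R * (b * ln 2) by apply: ler_wpM2r => //; exact: ltW.
  set t := (K + m)%N%:R. move=> h. 
  have -> : b * ln L - b * (ln 2 * t) = b * ln L - t * (b * ln 2) by ring.
  lra.
have Hent := He0 _ dpos dsmall.
set P := (delta K m)^-1 `^ gamma.
have P0 : 0 < P by apply: powR_gt0; rewrite invr_gt0.
have lnsz : ln (size (net K m))%:R <= 2 * (L * P).
  move: Hent; rewrite ltr_pdivrMr // /metric_entropy Hcov /= ltr_pdivrMr // => h.
  have l21 : ln (2 : R) <= 1 by have := @le_ln1Dx _ (1 : R) ltac:(lra).
  have : 0 <= 2 * L * P by rewrite !mulr_ge0 // ltW.
  rewrite -/(net K m) in h. rewrite -/P in h. move=> H. have := ler_wpM2l H l21. rewrite mulr1. lra.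
pose u : R := ln 2 * (K + m)%N%:R.
pose Q : R := expR (b * ln L + a * u).
have Q1 : L * P = Q by rewrite /P /delta -/u; exact: alg1.
have Q2 : 2 ^+ (K + m) * delta K m = Q by rewrite /delta -/u; exact: alg2.
have phi0 : 0 < phi by rewrite /phi mulr_gt0 // lt_max ltr01.
have N0r : 0 < N%:R :> R by rewrite ltr0n.
have hK1r : 2 ^+ K <= N%:R :> R by rewrite -natrX ler_nat.
have Q3 : Q <= L `^ b * phi `^ a * N%:R `^ a.
  rewrite mulrAC; apply: (@alg3 L b a u N%:R phi (K + m)) => //; first exact: ltW.
  rewrite exprD mulrC; apply: ler_pM => //; exact: ltW (exprn_gt0 _ _).
have Q4 : N%:R * (2 ^+ m * delta K m) <= 2 * Q.
  have : N%:R <= 2 * 2 ^+ K :> R by rewrite -exprS -natrX ler_nat ltnW.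
  move=> h; rewrite -Q2 exprD mulrA.
  have hm : 0 <= 2 ^+ m * delta K m by rewrite mulr_ge0 // ltW.
  have := ler_wpM2r hm h; rewrite -!mulrA; lra.
pose t : R := (K + m)%N%:R.
have tT0 : (T0%:R : R) <= t.
  rewrite /t ler_nat; apply: leq_trans (leq_addr m K); apply: leq_trans KT; exact: leq_maxl.
have hT0 : 130 / c < T0%:R.
  apply: le_lt_trans (ler_norm _) _; apply: lt_le_trans (unstable.ltr_norm_bound _) _.
  by rewrite ler_nat.
have T01 : 1 <= (T0%:R : R) by rewrite ler1n.
have cT0 : 130 <= c * T0%:R by move: hT0; rewrite ltr_pdivrMr // mulrC => /ltW.
have Qc : c * t^+2 <= Q.
  have au0 : 0 <= a * u by rewrite /u; apply: mulr_ge0; [exact: ltW | apply: mulr_ge0; [exact: ltW | exact: ler0n]].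
  have eQ : Q = expR (b * ln L) * expR (a * u) by rewrite /Q exp.expRD.
  have ec : c * t^+2 = expR (b * ln L) * ((a * u)^+2 / 2) by rewrite /c /u /t; ring.
  rewrite eQ ec; apply: ler_wpM2l; [exact: ltW (expR_gt0 _) | exact: exp_quad].
have mt : ((maxn K m)%:R : R) <= t by rewrite /t ler_nat geq_max leq_addr leq_addl.
have Q5 : 97 * (maxn K m)%:R + 33 <= Q.
  have ct0 : 0 <= c * t by rewrite mulr_ge0 // ?ltW //; lra.
  have := ler_wpM2l ct0 tT0.
  have := ler_wpM2r (ltW (lt_le_trans ltr01 (le_trans T01 tT0))) cT0.
  move=> h1 h2; nra.
apply: le_trans R1 _.
rewrite -natr1 -mulrA in R2.
rewrite -Q1 in Q3 Q4 Q5.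
rewrite -[73 * _ * _ * _]mulrA -[73 * _ * _]mulrA.
rewrite -[L `^ b * _ * _]mulrA in Q3.
move: R2 lnp lnsz Q3 Q4 Q5.
set A := LE _ _ _ _ _; set B := ln _; set S := \sum_(t < N) _.
set D := (maxn K m)%:R; set E := N%:R * _; set G := ln _; set LP := L * P.
set Z := L `^ b * _.
lra.
Qed.
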